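(* Let $n=2m+1\ge 3$ be odd, let $\theta$ be a generator of $\mathrm{Gal}(\mathbb{F}_{2^n}/\mathbb{F}_2)$, and let $G=A(n,\theta)$. Let $C\subseteq G$ be a union of conjugacy classes of elements of order $4$, obtained by choosing, for each pair $\{K,K^{(-1)}\}$ consisting of a conjugacy class $K$ of elements of order $4$ and its inverse class $K^{(-1)}=\{k^{-1}:k\in K\}$, exactly one of $K$ and $K^{(-1)}$. (In $G$ no class of elements of order $4$ equals its inverse class, so $C\cap C^{(-1)}=\emptyset$ and $C$ consists of exactly half of the conjugacy classes of elements of order 4.) Then the continuous-time quantum walk on the oriented Cayley graph $\mathrm{Cay}(G,C)$ has uniform mixing at time $\tau=\pi/2^{n+1}$, i.e. all entries of $e^{\tau S}$ have the same absolute value, where $S$ is the skew adjacency matrix of $\mathrm{Cay}(G,C)$.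
   Context: Let $\mathbb{F}_{2^n}$ be the field with $2^n$ elements and write $a^\theta$ for the image of $a$ under the field automorphism $\theta$. $A(n,\theta)$ is the group (under matrix multiplication) of $3\times 3$ matrices $\begin{bmatrix}1&a&b\\0&1&a^\theta\\0&0&1\end{bmatrix}$ with $a,b\in\mathbb{F}_{2^n}$; writing $(a,b)$ for this matrix, $(a,b)(c,d)=(a+c,\,b+d+ac^\theta)$. For a finite group $G$ and a subset $C\subseteq G$ with $1\notin C$, the Cayley digraph $\mathrm{Cay}(G,C)$ has vertex set $G$ and an arc from $g$ to $cg$ for every $g\in G$, $c\in C$; it is oriented when $C\cap C^{(-1)}=\emptyset$, where $C^{(-1)}=\{c^{-1}:c\in C\}$. For an oriented graph, the skew adjacency matrix $S$ is indexed by vertices, with $(u,v)$ entry $1$ if $(u,v)$ is an arc, $-1$ if $(v,u)$ is an arc, and $0$ otherwise. The quantum walk has transition matrices $U(t)=e^{tS}$, and it has uniform mixing at time $\tau$ if all entries of $U(\tau)$ have the same absolute value. *)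

(* Defs.v *)
From HB Require Import structures.
From mathcomp Require Import all_boot all_order all_algebra all_fingroup all_field.
From mathcomp Require Import all_classical all_reals all_analysis.
From mathcomp Require Import ring.
Set Implicit Arguments. Unset Strict Implicit. Unset Printing Implicit Defensive.
Import Order.TTheory GRing.Theory Num.Theory.
Import numFieldNormedType.Exports.

Definition Agrp (F : finFieldType) (th : {rmorphism F -> F}) : Type := (F * F)%type.

Section AGroup.
Variables (F : finFieldType) (th : {rmorphism F -> F}).
Local Open Scope ring_scope.

HB.instance Definition _ := Finite.on (Agrp th).

Definition Amul (x y : Agrp th) : Agrp th :=
  (x.1 + y.1, x.2 + y.2 + x.1 * th y.1).
Definition Aone : Agrp th := (0, 0).
Definition Ainv (x : Agrp th) : Agrp th := (- x.1, - x.2 + x.1 * th x.1).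

Lemma AmulA : associative Amul.
Proof.
move=> [a b] [c d] [e f]; rewrite /Amul /=; congr (_, _); first by rewrite addrA.
rewrite rmorphD /=; ring.
Qed.

Lemma Amul1 : left_id Aone Amul.
Proof. by move=> [a b]; rewrite /Amul /= !add0r mul0r addr0. Qed.

Lemma AmulV : left_inverse Aone Ainv Amul.
Proof.
move=> [a b]; rewrite /Amul /Aone /=; congr (_, _); first by rewrite addNr.
ring.
Qed.

HB.instance Definition _ := Finite_isGroup.Build (Agrp th) AmulA Amul1 AmulV.

End AGroup.

Section Skew.
Variables (gT : finGroupType) (R : realType).
Local Open Scope ring_scope.

Definition is_arc (C : {set gT}) (u v : gT) : bool := (v * u^-1)%g \in C.

Definition skew_adj (C : {set gT}) : 'M[R]_#|gT| :=
  \matrix_(i, j)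
    (if is_arc C (enum_val i) (enum_val j) then 1
     else if is_arc C (enum_val j) (enum_val i) then -1 else 0).
End Skew.

Section Expm.
Variables (R : realType) (N : nat).
Local Open Scope ring_scope.

Definition mxpow (A : 'M[R]_N) (k : nat) : 'M[R]_N := iter k (mulmx A) 1%:M.

Definition expm (t : R) (A : 'M[R]_N) : 'M[R]_N :=
  \matrix_(i, j) (limn (series (fun k : nat => t ^+ k / (k`!)%:R * mxpow A k i j))).

Definition uniform_mixing (S : 'M[R]_N) (tau : R) : Prop :=
  forall i j i' j', `|expm tau S i j| = `|expm tau S i' j'|.
End Expm.

(* Main.v *)
Require Import Defs.
From HB Require Import structures.
From mathcomp Require Import all_boot all_order all_algebra all_fingroup all_field.
From mathcomp Require Import all_classical all_reals all_analysis.
From mathcomp Require Import all_solvable.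
From mathcomp Require Import ring lra zify.
Import Order.TTheory GRing.Theory Num.Theory.
Set Implicit Arguments. Unset Strict Implicit. Unset Printing Implicit Defensive.
Import numFieldNormedType.Exports.
Section Fld.
Local Open Scope ring_scope.
Variables (F : finFieldType) (th : {rmorphism F -> F}) (m : nat).
Hypothesis HF : #|F| = (2 ^ (2 * m + 1))%N.
Hypothesis Hgen : forall sigma : {rmorphism F -> F}, bijective sigma ->
            exists k : nat, forall x, sigma x = iter k th x.

Local Notation nn := (2 * m + 1)%N.

Lemma ch2 : (2%N \in [pchar F]).
Proof. exact: (card_finPcharP HF). Qed.

Lemma two0 : (2%:R : F) = 0.
Proof. exact: pcharf0 ch2. Qed.

Lemma addxx (x : F) : x + x = 0.
Proof. exact: (addrr_pchar2 ch2). Qed.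

Lemma oppF (x : F) : - x = x.
Proof. exact: (oppr_pchar2 ch2). Qed.

Lemma iter_thX k (x : F) e : iter k th (x ^+ e) = (iter k th x) ^+ e.
Proof. by elim: k => //= k ->; rewrite rmorphXn. Qed.

Lemma fix01 (x : F) : th x = x -> x = 0 \/ x = 1.
Proof.
move=> Hx.
have [k Hk] := Hgen (injF_bij (fmorph_inj (pFrobenius_aut ch2 : {rmorphism F -> F}))).
have ik : iter k th x = x by elim: k {Hk} => //= k ->.
have x2 : x ^+ 2 = x by rewrite -(pFrobenius_autE ch2) Hk.
have : x * (x - 1) == 0 by rewrite mulrBr mulr1 -expr2 x2 subrr.
rewrite mulf_eq0 subr_eq0 => /orP[/eqP|/eqP]; by [left|right].
Qed.

Lemma xq (x : F) : x ^+ (2 ^ nn) = x.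
Proof. by rewrite -HF expf_card. Qed.

Lemma th_pow (x : F) : exists i, th x = x ^+ (2 ^ i).
Proof.
pose g i := x ^+ (2 ^ i).
pose rs := map g (index_iota 0 nn).
pose P := \prod_(a <- rs) ('X - a%:P).
pose Fr := (pFrobenius_aut ch2 : {rmorphism F -> F}).
have gS i : Fr (g i) = g i.+1 by rewrite /Fr /= pFrobenius_autE /g -exprM expnSr.
have PE : P = \prod_(0 <= i < nn) ('X - (g i)%:P) by rewrite /P big_map.
have FP : map_poly Fr P = P.
  rewrite PE rmorph_prod /=.
  under eq_bigr => i _ do rewrite map_polyXsubC gS.
  have E : \prod_(1 <= i < nn.+1) ('X - (g i)%:P) =
           \prod_(0 <= i < nn) ('X - (g i.+1)%:P) by rewrite big_add1.
  rewrite -E big_nat_recr ?addn1 //= [X in _ = X]big_ltn //.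
  by rewrite mulrC /g expn0 expr1 -[(2 * m).+1]addn1 xq.
have cP i : th P`_i = P`_i.
  have : Fr P`_i = P`_i by rewrite -coef_map FP.
  rewrite /Fr /= pFrobenius_autE => H2.
  have : P`_i * (P`_i - 1) == 0 by rewrite mulrBr mulr1 -expr2 H2 subrr.
  by rewrite mulf_eq0 subr_eq0 => /orP[/eqP->|/eqP->]; rewrite ?rmorph0 ?rmorph1.
have thP : map_poly th P = P by apply/polyP => i; rewrite coef_map /= cP.
have rx : root P x.
  rewrite root_prod_XsubC; apply/mapP; exists 0%N; last by rewrite /g expn0 expr1.
  by rewrite mem_index_iota addn1.
have : root P (th x) by rewrite /root -thP horner_map (eqP rx) rmorph0.
by rewrite root_prod_XsubC => /mapP[i _ ->]; exists i.
Qed.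

Lemma thn (x : F) : iter nn th x = x.
Proof.
have [i Hi] := th_pow x.
have E k : iter k th x = x ^+ ((2 ^ i) ^ k).
  elim: k => [|k IH] /=; first by rewrite expn0 expr1.
  by rewrite IH rmorphXn Hi -exprM expnS.
rewrite E expnAC; elim: i {Hi E} => [|i IH]; first by rewrite expn0 expr1.
by rewrite expnS exprM xq.
Qed.

Lemma iter_thD k (x y : F) : iter k th (x + y) = iter k th x + iter k th y.
Proof. by elim: k => //= k ->; rewrite rmorphD. Qed.
Lemma iter_thM k (x y : F) : iter k th (x * y) = iter k th x * iter k th y.
Proof. by elim: k => //= k ->; rewrite rmorphM. Qed.
Lemma iter_th1 k : iter k th (1 : F) = 1.
Proof. by elim: k => //= k ->; rewrite rmorph1. Qed.
Lemma iter_th0 k : iter k th (0 : F) = 0.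
Proof. by elim: k => //= k ->; rewrite rmorph0. Qed.

Definition Tr (x : F) : F := \sum_(i < nn) iter i th x.

Lemma TrD x y : Tr (x + y) = Tr x + Tr y.
Proof. by rewrite /Tr -big_split /=; apply: eq_bigr => i _; rewrite iter_thD. Qed.

Lemma Tr_fix x : th (Tr x) = Tr x.
Proof.
rewrite /Tr rmorph_sum /=.
have h1 : \sum_(i < nn.+1) iter i th x = \sum_(i < nn) iter i th x + iter nn th x.
  by rewrite big_ord_recr.
have h2 : \sum_(i < nn.+1) iter i th x = x + \sum_(i < nn) iter i.+1 th x.
  by rewrite big_ord_recl.
rewrite h1 thn in h2.
under eq_bigr => i _ do rewrite -iterS.
by apply: (addIr x); rewrite h2 addrC.
Qed.

Lemma Tr01 x : Tr x = 0 \/ Tr x = 1.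
Proof. exact: fix01 (Tr_fix x). Qed.

Lemma Tr1 : Tr 1 = 1.
Proof.
rewrite /Tr (eq_bigr (fun _ => 1)) ?sumr_const ?card_ord; last by move=> i _; rewrite iter_th1.
by rewrite -[1 in RHS]mulr1n natrD natrM two0 mul0r add0r.
Qed.

Lemma Tr_th x : Tr (th x) = Tr x.
Proof.
rewrite -[RHS]Tr_fix /Tr rmorph_sum; apply: eq_bigr => i _ /=.
by rewrite -iterSr.
Qed.

Lemma sum_pairs (V : zmodType) (h : nat -> V) k :
  \sum_(i < k.*2) h i = \sum_(j < k) (h j.*2 + h j.*2.+1).
Proof.
elim: k => [|k IH]; first by rewrite !big_ord0.
by rewrite doubleS !big_ord_recr /= IH addrA.
Qed.

Lemma hilbert90 w : Tr w = 0 -> exists u, u + th u = w.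
Proof.
move=> Tw; exists (\sum_(j < m.+1) iter j.*2 th w).
rewrite rmorph_sum -big_split /=.
under eq_bigr => j _ do rewrite -iterS.
rewrite -(sum_pairs (fun i => iter i th w)).
have -> : (m.+1).*2 = nn.+1 by rewrite -addnn; lia.
by rewrite big_ord_recr /= -/(Tr w) Tw add0r thn.
Qed.

Definition N (a : F) := a * th a.

Lemma N_eq0 a : (N a == 0) = (a == 0).
Proof. by rewrite /N mulf_eq0 fmorph_eq0 orbb. Qed.

Lemma iter2_inv (r : F) : th r = r^-1 -> forall j, iter j.*2 th r = r.
Proof.
move=> H; elim=> // j IH; rewrite doubleS /= IH H fmorphV H invrK //.
Qed.

Lemma N_inj a b : a != 0 -> b != 0 -> N a = N b -> a = b.
Proof.
move=> a0 b0 E; pose r := a / b.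
have r0 : r != 0 by rewrite mulf_neq0 ?invr_eq0.
have thr : th r = r^-1.
  apply: (mulfI r0); rewrite divrr ?unitfE //.
  rewrite /r rmorphM fmorphV /= mulrACA -invfM -/(N a) -/(N b) E divrr //.
  by rewrite unitfE N_eq0.
have e : (2 * m + 1 = (m.*2).+1)%N by rewrite addn1 mul2n.
have := thn r; rewrite e /= iter2_inv // thr => E2.
have r2 : r * r = 1 by rewrite -{1}E2 mulVf.
have : (r - 1) * (r - 1) == 0.
  have -> : (r - 1) * (r - 1) = r * r + 1 - 2%:R * r by ring.
  by rewrite r2 two0 mul0r subr0 addxx.
rewrite mulf_eq0 orbb subr_eq0 => /eqP r1.
by apply: (mulIf (invr_neq0 b0)); rewrite -/r r1 divrr // unitfE.
Qed.

Variable R : realType.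
Definition sg (t : F) : R := if t == 0 then 1 else -1.

Lemma sgTrD x y : sg (Tr (x + y)) = sg (Tr x) * sg (Tr y).
Proof.
rewrite /sg TrD; case: (Tr01 x) => ->; case: (Tr01 y) => ->;
  rewrite ?addr0 ?add0r ?addxx ?eqxx ?oner_eq0 ?mulr1 ?mul1r //.
by rewrite mulrNN mulr1.
Qed.

Lemma sgTr1 : sg (Tr 1) = -1.
Proof. by rewrite /sg Tr1 oner_eq0. Qed.

Lemma bal (l : F) : l != 0 -> \sum_b sg (Tr (l * b)) = 0.
Proof.
move=> l0; set S := \sum_b _.
have : S = - S.
  rewrite {1}/S (reindex_inj (addIr l^-1)) /= -sumrN; apply: eq_bigr => b _.
  by rewrite mulrDr divrr ?unitfE // sgTrD sgTr1 mulrN1.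
lra.
Qed.

Lemma sg_sq t : sg t * sg t = 1.
Proof. by rewrite /sg; case: eqP => _; rewrite ?mulr1 ?mulrNN ?mulr1. Qed.

Lemma Tr0 : Tr 0 = 0.
Proof. by rewrite /Tr big1 // => i _; rewrite iter_th0. Qed.

Local Notation G := (Agrp th).

Lemma mulE (x y : G) : (x * y)%g = (x.1 + y.1, x.2 + y.2 + x.1 * th y.1).
Proof. by []. Qed.
Lemma invE (x : G) : (x^-1)%g = (- x.1, - x.2 + x.1 * th x.1).
Proof. by []. Qed.
Lemma oneE : (1 : G)%g = (0, 0).
Proof. by []. Qed.

Lemma sumG (phi : G -> R) : \sum_x phi x = \sum_a \sum_b phi (a, b).
Proof. by rewrite pair_big; apply: eq_bigr => -[a b]. Qed.

Lemma sqE (x : G) : (x * x)%g = (0, N x.1).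
Proof. by rewrite mulE addxx addxx add0r. Qed.

Lemma ord_a0 (x : G) : x.1 = 0 -> #[x]%g != 4%N.
Proof.
move=> x0; have : (#[x]%g %| 2)%N.
  by rewrite order_dvdn expgS expg1 sqE x0 /N mul0r.
by apply: contraTN => /eqP ->.
Qed.

Lemma ord_a (x : G) : x.1 != 0 -> #[x]%g = 4%N.
Proof.
move=> x0.
have d4 : (#[x]%g %| 4)%N.
  rewrite order_dvdn.
  have -> : (x ^+ 4 = (x * x) * (x * x))%g by rewrite !expgS expg0 mulg1 !mulgA.
  by rewrite sqE /= addxx /N mul0r oneE.
have n2 : ~~ (#[x]%g %| 2)%N.
  rewrite order_dvdn expgS expg1 sqE; apply/eqP => -[] /eqP.
  by rewrite N_eq0 (negPf x0).
have := dvdn_leq (isT : 0 < 4)%N d4; have := order_gt0 x.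
move: d4 n2; case: #[x]%g => [|[|[|[|[|k]]]]] //.
Qed.

Variable C : {set G}.
Hypothesis HCord : forall c, c \in C -> #[c]%g = 4%N.
Hypothesis HCcl : forall c, c \in C -> (c ^: [set: G] \subset C)%g.
Hypothesis HCchoice : forall g : G, #[g]%g = 4%N ->
      ((g ^: [set: G] \subset C) (+) ((g ^: [set: G])^-1 \subset C))%g.

Definition fC (g : G) : R := if g \in C then 1 else if (g^-1)%g \in C then -1 else 0.

Lemma notC0 (g : G) : g.1 = 0 -> g \notin C.
Proof. by move=> g0; apply/negP => /HCord /eqP; apply/negP/ord_a0. Qed.

Lemma fC0 (g : G) : g.1 = 0 -> fC g = 0.
Proof.
move=> g0; rewrite /fC (negPf (notC0 g0)) (negPf (notC0 (g := (g^-1)%g) _)) //.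
by rewrite invE /= g0 oppr0.
Qed.

Lemma memCJ (g h : G) : ((g ^ h)%g \in C) = (g \in C).
Proof.
apply/idP/idP => H.
- have := HCcl H => /fintype.subsetP; apply; rewrite -{1}(conjgK h g).
  by apply: memJ_class; rewrite inE.
- by have := HCcl H => /fintype.subsetP; apply; apply: memJ_class; rewrite inE.
Qed.

Lemma fCJ (g h : G) : fC (g ^ h)%g = fC g.
Proof. by rewrite /fC memCJ -conjVg memCJ. Qed.

Lemma fC_cases (g : G) : g.1 != 0 ->
  (g \in C /\ (g^-1)%g \notin C) \/ (g \notin C /\ (g^-1)%g \in C).
Proof.
move=> g0; have := HCchoice (ord_a g0).
set K := (g ^: [set: G])%g.
have gK : g \in K by exact: (class_refl [set: G]%G g).
have clK : (K \subset C) = (g \in C).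
  apply/idP/idP; [by move/fintype.subsetP; apply | exact: HCcl].
have invK : (K^-1 \subset C)%g = ((g^-1)%g \in C).
  apply/idP/idP.
  - by move/fintype.subsetP; apply; rewrite mem_invg invgK.
  - move=> /HCcl /fintype.subsetP sub; apply/fintype.subsetP => y; rewrite mem_invg.
    case/imsetP => h _ yE; apply: sub; rewrite -[y]invgK yE -conjVg.
    by apply: memJ_class; rewrite inE.
rewrite clK invK; case: (g \in C); case: ((g^-1)%g \in C) => //= _; by [left|right].
Qed.

Lemma fC_inv (g : G) : g.1 != 0 -> fC (g^-1)%g = - fC g.
Proof.
move=> g0; rewrite /fC invgK.
case: (fC_cases g0) => -[H1 H2].
  by rewrite H1 (negPf H2).
by rewrite H2 (negPf H1) opprK.
Qed.

Lemma fC_sq (g : G) : g.1 != 0 -> fC g * fC g = 1.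
Proof.
move=> g0; rewrite /fC.
case: (fC_cases g0) => -[H1 H2].
  by rewrite H1 mulr1.
by rewrite H2 (negPf H1) mulrNN mulr1.
Qed.

Lemma conjE (a b c d : F) : (((a, b) : G) ^ ((c, d) : G))%g = (a, b + a * th c - c * th a).
Proof.
rewrite conjgE !mulE invE /=; congr (_, _); first by ring.
rewrite rmorphD /=; ring.
Qed.

Lemma fC_shift0 (a y : F) : a != 0 -> Tr (y / N a) = 0 -> fC (a, y) = fC (a, 0).
Proof.
move=> a0 T0; have [u Hu] := hilbert90 T0.
have Na0 : N a != 0 by rewrite N_eq0.
have yE : y = N a * (u + th u) by rewrite Hu mulrC divfK.
have -> : ((a, y) : G) = (((a, 0) : G) ^ (((a * u)%R, 0) : G))%g.
  rewrite conjE; congr (_, _); rewrite yE rmorphM /=.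
  rewrite (oppF (a * u * th a)) /N; ring.
by rewrite fCJ.
Qed.

Definition eps (a : F) := fC (a, 0).

Lemma fC_shift (a b : F) : a != 0 -> fC (a, b) = eps a * sg (Tr (b / N a)).
Proof.
move=> a0; have Na0 : N a != 0 by rewrite N_eq0.
case: (Tr01 (b / N a)) => T.
  by rewrite (fC_shift0 a0 T) /eps /sg T eqxx mulr1.
have e : (((a, b) : G)^-1)%g = (a, b + N a) by rewrite invE /= !oppF.
have T2 : Tr ((b + N a) / N a) = 0 by rewrite mulrDl divff // TrD T Tr1 addxx.
have := fC_inv (g := (a, b)) a0; rewrite e (fC_shift0 a0 T2) => E.
by rewrite /sg T oner_eq0 /eps E mulrN1 opprK.
Qed.

Lemma fCE (x : G) : fC x = (x.1 != 0)%:R * eps x.1 * sg (Tr (x.2 / N x.1)).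
Proof.
case: x => a b /=; have [->|a0] := eqVneq a 0.
  by rewrite fC0 // !mul0r.
by rewrite fC_shift // mul1r.
Qed.

Lemma eps_sq a : a != 0 -> eps a * eps a = 1.
Proof. by move=> a0; apply: fC_sq. Qed.

Lemma mulVE (h x : G) : (h * x^-1)%g = (h.1 + x.1, h.2 + x.2 + N x.1 + h.1 * th x.1).
Proof.
rewrite mulE invE /= rmorphN mulrN !oppF; congr (_, _); rewrite /N; ring.
Qed.

Definition conv (phi chi : G -> R) (h : G) : R := \sum_x phi x * chi (h * x^-1)%g.

Lemma sgTrM l b : sg (Tr (b / l)) = sg (Tr (l^-1 * b)).
Proof. by rewrite mulrC. Qed.

Lemma inner (a al be : F) : a != 0 -> al + a != 0 ->
  \sum_b fC (a, b) * fC (((al, be) : G) * ((a, b) : G)^-1)%g =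
  eps a * eps (al + a) * sg (Tr ((be + N a + al * th a) / N (al + a))) *
  \sum_b sg (Tr (((N a)^-1 + (N (al + a))^-1) * b)).
Proof.
move=> a0 aa0; rewrite mulr_sumr; apply: eq_bigr => b _.
rewrite mulVE /= !fCE /= a0 aa0 !mul1r.
have -> : be + b + N a + al * th a = (be + N a + al * th a) + b by ring.
rewrite (mulrDl (N a)^-1 (N (al + a))^-1 b) sgTrD -!sgTrM mulrDl sgTrD; ring.
Qed.

Lemma inner0 (a al be : F) : (a == 0) || (al + a == 0) ->
  \sum_b fC (a, b) * fC (((al, be) : G) * ((a, b) : G)^-1)%g = 0.
Proof.
case/orP => /eqP H; apply: big1 => b _.
  by rewrite fC0 ?mul0r.
by rewrite [fC (_ * _)%g]fC0 ?mulr0 // mulVE.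
Qed.

Lemma sum_ne0 (g : F -> R) : \sum_a (a != 0)%:R * g a = \sum_a g a - g 0.
Proof.
rewrite (bigD1 0) //= eqxx mul0r add0r [in RHS](bigD1 0) //= addrAC subrr add0r.
by apply: eq_bigr => a /= ->; rewrite mul1r.
Qed.

Lemma N0 : N 0 = 0.
Proof. by rewrite /N mul0r. Qed.
Lemma sg0 : sg 0 = 1.
Proof. by rewrite /sg eqxx. Qed.

Lemma qpos : (0 < #|F|)%N.
Proof. by rewrite HF expn_gt0. Qed.

Lemma conv_ff (h : G) : conv fC fC h =
  - (#|F|%:R ^+ 2) * (h == 1%g)%:R + #|F|%:R * (h.1 == 0)%:R.
Proof.
case: h => al be; rewrite /conv sumG /=.
have [->|al0] := eqVneq al 0.
- have inn a : \sum_b fC (a, b) * fC (((0, be) : G) * ((a, b) : G)^-1)%g =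
      (a != 0)%:R * (- #|F|%:R * sg (Tr (be / N a))).
    have [->|a0] := eqVneq a 0; first by rewrite inner0 ?eqxx // mul0r.
    rewrite inner ?add0r // eps_sq // mul1r mul0r addr0 addxx.
    rewrite (eq_bigr (fun=> 1)); last by move=> b _; rewrite mul0r Tr0 /sg eqxx.
    rewrite sumr_const mulrDl divff ?N_eq0 // sgTrD sgTr1 /=.
    ring.
  rewrite (eq_bigr _ (fun a _ => inn a)) sum_ne0 N0 invr0 mulr0 Tr0 sg0 mulr1.
  have [->|be0] := eqVneq be 0.
    rewrite (eq_bigr (fun=> - #|F|%:R)); last by move=> a _; rewrite mul0r Tr0 sg0 mulr1.
    rewrite sumr_const oneE eqxx /= -mulr_natr; ring.
  rewrite -mulr_sumr.
  have -> : \sum_i sg (Tr (be / N i)) = 0.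
    have inj : injective (fun a => be / N a).
      move=> a a' /= /(mulfI be0) /invr_inj E.
      have [a0|a0] := eqVneq a 0.
        by move: E; rewrite a0 {1}/N mul0r => /esym/eqP; rewrite N_eq0 => /eqP.
      have [a'0|a'0] := eqVneq a' 0.
        by move: E; rewrite a'0 {2}/N mul0r => /eqP; rewrite N_eq0 (negPf a0).
      exact: N_inj.
    have H0 : \sum_y sg (Tr y) = 0.
      by rewrite -[RHS](bal (oner_neq0 F)); apply: eq_bigr => y _; rewrite mul1r.
    by rewrite (reindex_inj inj) in H0.
  have -> : (((0, be) : G) == 1%g) = false.
    by rewrite oneE; apply/negbTE; apply: contra be0 => /eqP [->].
  by rewrite /=; ring.
- rewrite big1; last first.
    move=> a _; have [a0|a0] := boolP ((a == 0) || (al + a == 0)).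
      by rewrite inner0.
    move: a0; rewrite negb_or => /andP[a0 aa0].
    rewrite inner // bal ?mulr0 //.
    apply/eqP => E.
    have Ninv : (N a)^-1 = (N (al + a))^-1 by apply/eqP; rewrite -subr_eq0 oppF E.
    have : a = al + a by apply: (N_inj a0 aa0); exact: invr_inj Ninv.
    move/(congr1 (fun z => z - a)); rewrite subrr addrK => /esym/eqP.
    by rewrite (negPf al0).
  have -> : (((al, be) : G) == 1%g) = false.
    by rewrite oneE; apply/negbTE; apply: contra al0 => /eqP [->].
  by rewrite /=; ring.
Qed.

Definition zf (x : G) : R := (x.1 == 0)%:R.

Lemma conv_zf (h : G) : conv zf fC h = 0.
Proof.
case: h => al be; rewrite /conv sumG /= (bigD1 0) //= [X in _ + X]big1 ?addr0; last first.
  move=> a /= a0; apply: big1 => b _; by rewrite /zf /= (negPf a0) mul0r.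
under eq_bigr => b _ do rewrite /zf /= eqxx mul1r mulVE /= /N !rmorph0 !mulr0 !addr0.
have [->|al0] := eqVneq al 0.
  by apply: big1 => b _; rewrite fC0.
under eq_bigr => b _ do rewrite fCE /= al0 mul1r mulrDl sgTrD sgTrM [b / _]mulrC mulrA.
rewrite -mulr_sumr bal ?mulr0 //.
by rewrite invr_eq0 N_eq0.
Qed.
End Fld.
Section Lim.
Local Open Scope ring_scope.
Local Open Scope classical_set_scope.
Variables (R : realType) (n : nat) (A : 'M[R]_n) (c : R).
Hypothesis A3 : A *m (A *m A) = c *: A.

Lemma mxpowS k : mxpow A k.+1 = A *m mxpow A k.
Proof. by []. Qed.

Lemma pw_odd j : mxpow A (j.*2.+1) = c ^+ j *: A.
Proof.
elim: j => [|j IH]; first by rewrite /mxpow /= mulmx1 expr0 scale1r.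
rewrite doubleS 2!mxpowS IH -!scalemxAr A3 scalerA exprSr.
by [].
Qed.

Lemma pw_even j : mxpow A (j.*2.+2) = c ^+ j *: (A *m A).
Proof.
elim: j => [|j IH]; first by rewrite /mxpow /= mulmx1 expr0 scale1r.
have E4 : A *m (A *m (A *m A)) = (A *m (A *m A)) *m A by rewrite !mulmxA.
rewrite doubleS 2!mxpowS IH -!scalemxAr E4 A3 -scalemxAl.
by rewrite scalerA exprSr.
Qed.

Definition indk (k : nat) : R := (k == 0)%:R.

Lemma series_ind : series indk @ \oo --> (1:R).
Proof.
rewrite -cvg_shiftS.
have -> : [sequence series indk n.+1]_n = fun=> 1.
  apply/funext => k /=; rewrite /series /= big_nat_recl // /indk eqxx.
  by rewrite big1 ?addr0 // => i _.
exact: cvg_cst.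
Qed.

Lemma cvg_sin (x : R) : series (sin_coeff x) @ \oo --> sin x.
Proof. by rewrite unlock; exact: (@is_cvg_series_sin_coeff R). Qed.
Lemma cvg_cos (x : R) : series (cos_coeff x) @ \oo --> cos x.
Proof. by rewrite unlock; exact: (@is_cvg_series_cos_coeff R). Qed.

Variables (q t : R) (i j : 'I_n) (d ff zz : R).
Hypothesis q0 : q != 0.
Hypothesis cE : c = - (q ^+ 2).
Hypothesis dE : (1%:M : 'M[R]_n) i j = d.
Hypothesis fE : A i j = ff.
Hypothesis A2E : (A *m A) i j = - (q ^+ 2) * d + q * zz.

Lemma term_eq k : t ^+ k / k`!%:R * mxpow A k i j =
  d * cos_coeff (q * t) k + ff / q * sin_coeff (q * t) k
  + zz / q * (indk k - cos_coeff (q * t) k).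
Proof.
rewrite /cos_coeff /sin_coeff /indk /=.
have [e|o] := boolP (~~ odd k).
- have [k0|kpos] := eqVneq k 0.
    rewrite k0 /= /mxpow /= dE -!exprnP !expr0 fact0.
    by field.
  have [j' kE] : exists j', k = j'.*2.+2.
    have h := odd_double_half k; move: e kpos h; case: (odd k) => //= _ kp h.
    exists (k./2.-1); move: kp; rewrite -h -!muln2 add0n; lia.
  rewrite kE pw_even mxE A2E cE /= odd_double /= mul0r mul1r.
  rewrite doubleK -exprnP exprMn exprNn.
  rewrite -[j'.*2.+2]addn2 !exprD -mul2n !exprM [(-1) ^+ _.+1]exprS.
  set T := (t ^+ 2) ^+ j'; set Q := (q ^+ 2) ^+ j'; set E := (-1) ^+ j'.
  field; rewrite q0 /=; by rewrite pnatr_eq0 -lt0n fact_gt0.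
- have [j' kE] : exists j', k = j'.*2.+1.
    by exists k./2; rewrite -{1}(odd_double_half k) (negbNE o).
  rewrite (negbNE o) kE pw_odd mxE fE cE /= doubleK -!exprnP exprMn [(- q ^+ 2) ^+ _]exprNn.
  rewrite -[j'.*2.+1]addn1 !exprD -mul2n !exprM.
  set T := (t ^+ 2) ^+ j'; set Q := (q ^+ 2) ^+ j'; set E := (-1) ^+ j'.
  field; rewrite q0 /=; by rewrite pnatr_eq0 -lt0n fact_gt0.
Qed.

Lemma expm_entry : expm t A i j =
  d * cos (q * t) + ff / q * sin (q * t) + zz / q * (1 - cos (q * t)).
Proof.
rewrite /expm mxE.
have -> : series (fun k => t ^+ k / k`!%:R * mxpow A k i j) =
  (fun N => d * series (cos_coeff (q * t)) N + ff / q * series (sin_coeff (q * t)) N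
    + zz / q * (series indk N - series (cos_coeff (q * t)) N)).
  apply/funext => N; rewrite /series /=.
  under eq_bigr => k _ do rewrite term_eq.
  by rewrite -sumrB !mulr_sumr -!big_split.
apply: cvg_lim => //.
apply: cvgD; first apply: cvgD.
- by apply: cvgM; [exact: cvg_cst | exact: cvg_cos].
- by apply: cvgM; [exact: cvg_cst | exact: cvg_sin].
- apply: cvgM; first exact: cvg_cst.
  by apply: cvgB; [exact: series_ind | exact: cvg_cos].
Qed.
End Lim.
Section Mx.
Local Open Scope ring_scope.
Variables (gT : finGroupType) (R : realType).

Definition Mf (phi : gT -> R) : 'M[R]_#|gT| :=
  \matrix_(i, j) phi (enum_val j * (enum_val i)^-1)%g.

Definition convg (phi chi : gT -> R) (h : gT) : R := \sum_x phi x * chi (h * x^-1)%g.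

Lemma sum_enum (phi : gT -> R) : \sum_(k < #|gT|) phi (enum_val k) = \sum_x phi x.
Proof. by rewrite -big_enum_val. Qed.

Lemma mulMf phi chi : Mf phi *m Mf chi = Mf (convg phi chi).
Proof.
apply/matrixP => i j; rewrite !mxE.
under eq_bigr => k _ do rewrite !mxE.
rewrite (sum_enum (fun v => phi (v * (enum_val i)^-1)%g * chi (enum_val j * v^-1)%g)).
rewrite (reindex_inj (mulIg (enum_val i))) /=; apply: eq_bigr => x _.
by rewrite mulgK invMg mulgA.
Qed.

Lemma Mf1 : Mf (fun h => (h == 1%g)%:R) = 1%:M.
Proof.
apply/matrixP => i j; rewrite !mxE -eq_mulgV1 eq_sym.
by rewrite (inj_eq enum_val_inj).
Qed.

Lemma MfL a b phi chi : Mf (fun h => a * phi h + b * chi h) = a *: Mf phi + b *: Mf chi.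
Proof. by apply/matrixP => i j; rewrite !mxE. Qed.

Lemma Mf0 : Mf (fun=> 0) = 0.
Proof. by apply/matrixP => i j; rewrite !mxE. Qed.

End Mx.

Lemma natexp (k : nat) : (2 ^+ k)%R = (2 ^ k)%N.
Proof. by elim: k => // k IH; rewrite exprS IH expnS. Qed.

Unset Implicit Arguments.
Set Strict Implicit.

Theorem mainTheorem1 (m : nat) (Hm : (1 <= m)%N)
  (F : finFieldType) (HF : #|F| = (2 ^ (2 * m + 1))%N)
  (th : {rmorphism F -> F}) (Hthbij : bijective th)
  (Hgen : forall sigma : {rmorphism F -> F}, bijective sigma ->
            exists k : nat, forall x, sigma x = iter k th x)
  (C : {set Agrp th})
  (HCord : forall c, c \in C -> #[c]%g = 4%N)
  (HCcl : forall c, c \in C -> (c ^: [set: Agrp th] \subset C)%g)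
  (HCchoice : forall g : Agrp th, #[g]%g = 4%N ->
      ((g ^: [set: Agrp th] \subset C) (+) ((g ^: [set: Agrp th])^-1 \subset C))%g)
  (R : realType) :
  uniform_mixing (skew_adj R C) (pi / (2 ^+ (2 * m + 2))%:R)%R.
Proof.
set tau := (pi / _)%R.
pose q : R := (#|F|%:R)%R.
have q0 : q != 0%R by rewrite /q HF pnatr_eq0 expn_eq0.
have qgt0 : (0 < q)%R by rewrite lt0r q0 ler0n.
pose S := skew_adj R C.
have SE : S = Mf (fC R C).
  apply/matrixP => i j; rewrite !mxE /fC /is_arc.
  by rewrite invMg invgK.
have SS : (S *m S = (- q ^+ 2) *: 1%:M + q *: Mf (zf R))%R.
  rewrite SE mulMf -Mf1 -MfL; congr Mf; apply/funext => h.
  exact: (conv_ff HF Hgen R HCord HCcl HCchoice h).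
have JS : (Mf (zf R) *m S = 0)%R.
  rewrite SE mulMf -(Mf0 (Agrp th) R); congr Mf; apply/funext => h.
  exact: (conv_zf HF Hgen R HCord HCcl HCchoice h).
have A3 : (S *m (S *m S) = (- q ^+ 2) *: S)%R.
  by rewrite mulmxA SS mulmxDl -!scalemxAl mul1mx JS scaler0 addr0.
have qt : (q * tau = pi / 2)%R.
  rewrite /tau /q HF natexp !natrX.
  have -> : (2 * m + 2 = (2 * m + 1).+1)%N by rewrite addn1 addn2.
  rewrite exprS; field.
  by rewrite expf_neq0 // pnatr_eq0.
suff H : forall i j, (`|expm tau S i j| = q^-1)%R by move=> i j i' j'; rewrite !H.
move=> i j.
set h := (enum_val j * (enum_val i)^-1)%g.
have fE : S i j = fC R C h by rewrite SE mxE.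
have A2E : ((S *m S) i j = - q ^+ 2 * (1%:M : 'M[R]_ _) i j + q * zf R h)%R.
  by rewrite SS !mxE.
rewrite (expm_entry A3 tau q0 erefl erefl fE A2E) qt cos_pihalf sin_pihalf.
rewrite !mulr0 subr0 !mulr1 add0r.
have [h0|h0] := eqVneq h.1 0%R.
  rewrite (fC0 HF R HCord h0) /zf h0 eqxx mul0r add0r mul1r.
  by rewrite ger0_norm // invr_ge0 ltW.
rewrite /zf (negPf h0) mul0r addr0.
have sq := fC_sq HF R HCcl HCchoice h0.
have : ((fC R C h) ^+ 2 == 1)%R by rewrite expr2 sq.
rewrite sqrf_eq1 => /orP[/eqP->|/eqP->].
  by rewrite mul1r ger0_norm // invr_ge0 ltW.
by rewrite mulN1r normrN ger0_norm // invr_ge0 ltW.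
Qed.
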